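(* Let $d>1$ be an integer and $\mu>0$ an integer. For every relation $R\in\{\le,<,\ge,>,=,\neq\}$ there is a B\''uchi automaton over $\{0,\dots,\mu\}\times\{0,\dots,\mu\}$ accepting a pair $(A,B)$ of sequences in $\{0,\dots,\mu\}^\omega$ (read synchronously) if and only if $\mathrm{DS}(A,d)\,R\,\mathrm{DS}(B,d)$; i.e. the discounted-sum comparator for integer discount factors is $\omega$-regular for all relations.
   Context: $\mathrm{DS}(A,d)=\sum_{i\ge0}A[i]/d^i$. *)

(* Defs.v *)
From Stdlib Require Import Reals List ClassicalEpsilon.
Open Scope R_scope.

Definition digit (mu : nat) : Type := { n : nat | (n <= mu)%nat }.

Record Buchi (Sigma : Type) : Type := mkBuchi {
  bstate : Type;
  bstate_finite : exists l : list bstate, forall q : bstate, In q l;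
  binit : bstate -> Prop;
  bdelta : bstate -> Sigma -> bstate -> Prop;
  bacc : bstate -> Prop
}.
Arguments bstate {Sigma}.
Arguments binit {Sigma}.
Arguments bdelta {Sigma}.
Arguments bacc {Sigma}.

Definition buchi_accepts {Sigma : Type} (M : Buchi Sigma) (w : nat -> Sigma) : Prop :=
  exists rho : nat -> bstate M,
    binit M (rho 0%nat) /\
    (forall i : nat, bdelta M (rho i) (w i) (rho (S i))) /\
    (forall n : nat, exists m : nat, (n <= m)%nat /\ bacc M (rho m)).

Definition DS {mu : nat} (A : nat -> digit mu) (d : nat) : R :=
  epsilon (inhabits 0)
    (fun l => infinite_sum (fun i => INR (proj1_sig (A i)) / (INR d) ^ i) l).

Inductive cmp_rel : Type := RLe | RLt | RGe | RGt | REq | RNeq.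

Definition cmp_interp (r : cmp_rel) (x y : R) : Prop :=
  match r with
  | RLe => x <= y
  | RLt => x < y
  | RGe => x >= y
  | RGt => x > y
  | REq => x = y
  | RNeq => x <> y
  end.

(* Main.v *)
Require Import Defs.
From Stdlib Require Import Reals List ClassicalEpsilon.
Open Scope R_scope.
From Stdlib Require Import Reals List ClassicalEpsilon Lra Lia ZArith ProofIrrelevance.
Open Scope R_scope.

Fixpoint ps (f : nat -> R) (n : nat) : R :=
  match n with O => 0 | S m => ps f m + f m end.

Lemma sum_ps f N : sum_f_R0 f N = ps f (S N).
Proof. induction N; simpl; [lra|]. rewrite IHN. simpl. lra. Qed.

Lemma ps_shift f n k : ps f (n + k) = ps f n + ps (fun j => f (n + j)%nat) k.
Proof. induction k; simpl. rewrite Nat.add_0_r; lra.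
rewrite Nat.add_succ_r; simpl. rewrite IHk. lra. Qed.

Lemma pow_unb dr : 1 < dr -> forall C, exists n, C < dr ^ n.
Proof. intros h C. destruct (Pow_x_infinity dr) with (b := C + 1) as [N HN].
 rewrite Rabs_right; lra.
 exists N. specialize (HN N (le_n _)). rewrite Rabs_right in HN. lra.
 apply Rle_ge, pow_le; lra. Qed.

Section Geo.
Variable dr : R.
Hypothesis hdr : 1 < dr.
Variable B : R.
Variable f : nat -> R.
Hypothesis hf : forall i, Rabs (f i) <= B / dr ^ i.

Lemma geo_aux : forall k, Rabs (ps f k) <= B * dr / (dr - 1) - B * dr / ((dr - 1) * dr ^ k).
Proof.
 assert (Hp : forall k, 0 < dr ^ k) by (intro; apply pow_lt; lra).
 induction k; simpl.
 - rewrite Rabs_R0. replace (B * dr / (dr - 1) - B * dr / ((dr - 1) * 1)) with 0 by (field; lra). lra.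
 - eapply Rle_trans. apply Rabs_triang. specialize (hf k). specialize (Hp k).
   replace (B * dr / (dr - 1) - B * dr / ((dr - 1) * (dr * dr ^ k)))
     with ((B * dr / (dr - 1) - B * dr / ((dr - 1) * dr ^ k)) + B / dr ^ k) by (field; lra).
   lra.
Qed.

Lemma B_nonneg : 0 <= B.
Proof. specialize (hf 0). simpl in hf. pose proof (Rabs_pos (f 0)). lra. Qed.

Lemma geo_bound : forall n k, Rabs (ps f (n + k) - ps f n) <= B / dr ^ n * dr / (dr - 1).
Proof.
 intros n k. rewrite ps_shift. replace (ps f n + ps (fun j => f (n + j)%nat) k - ps f n)
   with (ps (fun j => f (n + j)%nat) k) by ring.
 assert (Hn : 0 < dr ^ n) by (apply pow_lt; lra).
 assert (Hk : 0 < dr ^ k) by (apply pow_lt; lra).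
 pose proof (B_nonneg) as HB0.
 assert (H : forall j, Rabs (f (n + j)%nat) <= (B / dr ^ n) / dr ^ j).
 { intro j. eapply Rle_trans. apply hf. rewrite pow_add.
   right. field. split; apply Rgt_not_eq, pow_lt; lra. }
 clear hf. set (g := fun j => f (n + j)%nat) in *.
 assert (Hg : forall k, Rabs (ps g k) <= (B / dr ^ n) * dr / (dr - 1) - (B / dr^n) * dr / ((dr - 1) * dr ^ k)).
 { intro k0. revert k0. set (B' := B / dr ^ n) in *.
   assert (Hp : forall k, 0 < dr ^ k) by (intro; apply pow_lt; lra).
   induction k0; simpl.
   - rewrite Rabs_R0. replace (B' * dr / (dr - 1) - B' * dr / ((dr - 1) * 1)) with 0 by (field; lra). lra.
   - eapply Rle_trans. apply Rabs_triang. specialize (H k0). specialize (Hp k0).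
     replace (B' * dr / (dr - 1) - B' * dr / ((dr - 1) * (dr * dr ^ k0)))
       with ((B' * dr / (dr - 1) - B' * dr / ((dr - 1) * dr ^ k0)) + B' / dr ^ k0) by (field; lra).
     unfold g in *. lra. }
 specialize (Hg k).
 assert (0 <= B / dr ^ n * dr / ((dr - 1) * dr ^ k)).
 { apply Rmult_le_pos. apply Rmult_le_pos. apply Rmult_le_pos; [lra| left; apply Rinv_0_lt_compat; lra]. lra.
   left; apply Rinv_0_lt_compat, Rmult_lt_0_compat; lra. }
 lra.
Qed.

Lemma geo_conv : exists l, infinite_sum f l.
Proof.
 destruct (R_complete (fun N => sum_f_R0 f N)) as [l Hl].
 - intros eps He. pose proof B_nonneg.
   destruct (pow_unb dr hdr (2 * B * dr / (dr - 1) / eps)) as [N HN].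
   exists N. intros n m Hn Hm. unfold R_dist. rewrite !sum_ps.
   assert (Hd : forall a b, (N <= a)%nat -> (N <= b)%nat -> Rabs (ps f b - ps f a) <= B / dr ^ N * dr / (dr - 1) * 2).
   { intros a b Ha Hb. replace b with (N + (b - N))%nat by lia. replace a with (N + (a - N))%nat at 1 by lia.
     pose proof (geo_bound N (b - N)). pose proof (geo_bound N (a - N)).
     replace (ps f (N + (b - N)) - ps f (N + (a - N))) with
       ((ps f (N + (b - N)) - ps f N) - (ps f (N + (a - N)) - ps f N)) by ring.
     unfold Rminus at 1. eapply Rle_trans. apply Rabs_triang. rewrite Rabs_Ropp. lra. }
   assert (HN0 : 0 < dr ^ N) by (apply pow_lt; lra).
   specialize (Hd (S m) (S n)). 
   eapply Rle_lt_trans. apply Hd; lia.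
   apply (Rmult_lt_reg_r (dr ^ N)); auto.
   apply (Rmult_lt_reg_r (dr - 1)); [lra|].
   replace (B / dr ^ N * dr / (dr - 1) * 2 * dr ^ N * (dr - 1)) with (2 * B * dr) by (field; lra).
   apply (Rmult_lt_compat_r eps) in HN; auto.
   replace (2 * B * dr / (dr - 1) / eps * eps) with (2 * B * dr / (dr - 1)) in HN by (field; lra).
   apply (Rmult_lt_compat_r (dr - 1)) in HN; [|lra].
   replace (2 * B * dr / (dr - 1) * (dr - 1)) with (2 * B * dr) in HN by (field; lra).
   lra.
 - exists l. exact Hl.
Qed.
End Geo.
Lemma geo_tail dr B f : 1 < dr -> (forall i, Rabs (f i) <= B / dr ^ i) ->
  forall l, infinite_sum f l -> forall n, Rabs (l - ps f n) <= B / dr ^ n * dr / (dr - 1).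
Proof.
 intros hdr hf l Hl n. apply Rnot_lt_le. intro Hc.
 destruct (Hl (Rabs (l - ps f n) - B / dr ^ n * dr / (dr - 1))) as [N HN]; [lra|].
 specialize (HN (max N n) (Nat.le_max_l _ _)). unfold R_dist in HN.
 rewrite sum_ps in HN. pose proof (geo_bound dr hdr B f hf n (S (max N n) - n)) as G.
 replace (n + (S (max N n) - n))%nat with (S (max N n)) in G by lia.
 assert (Rabs (l - ps f n) <= Rabs (ps f (S (Init.Nat.max N n)) - l) + Rabs (ps f (S (Init.Nat.max N n)) - ps f n)).
 { replace (l - ps f n) with (- (ps f (S (Init.Nat.max N n)) - l) + (ps f (S (Init.Nat.max N n)) - ps f n)) by ring.
   eapply Rle_trans. apply Rabs_triang. rewrite Rabs_Ropp. lra. }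
 lra.
Qed.
Lemma Rabs_bnd x a : Rabs x <= a -> - a <= x <= a.
Proof. intro h. pose proof (Rle_abs x). pose proof (Rle_abs (- x)). rewrite Rabs_Ropp in H0. lra. Qed.

Lemma sig_list (P : Z -> Prop) (l : list Z) :
  (forall z, P z -> In z l) -> exists l' : list {z | P z}, forall q, In q l'.
Proof.
 intro H. assert (G : forall l, exists l' : list {z | P z}, forall q, In (proj1_sig q) l -> In q l').
 { induction l0 as [|x l0 IH].
   - exists nil. intros q [].
   - destruct IH as [l' Hl']. destruct (classic (P x)) as [p|np].
     + exists (exist _ x p :: l'). intros [z pz] [E|E]; simpl in *.
       * left. subst. f_equal. apply ProofIrrelevance.proof_irrelevance.
       * right. apply (Hl' (exist _ z pz)). exact E.
     + exists l'. intros [z pz] [E|E]; simpl in *.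
       * subst. contradiction.
       * apply (Hl' (exist _ z pz)). exact E. }
 destruct (G l) as [l' Hl']. exists l'. intro q. apply Hl', H, proj2_sig.
Qed.

Lemma range_list (a b : Z) : exists l, forall z, (a <= z <= b)%Z -> In z l.
Proof.
 exists (map (fun k => (a + Z.of_nat k)%Z) (seq 0 (Z.to_nat (b - a + 1)))).
 intros z Hz. apply in_map_iff. exists (Z.to_nat (z - a)). split.
 - rewrite Z2Nat.id; lia.
 - apply in_seq. lia.
Qed.

Definition Kc (d mu : nat) : Z := (Z.of_nat mu / (Z.of_nat d - 1))%Z.
Definition clamp (K z : Z) : Z := Z.max (-(K+1)) (Z.min (K+1) z).
Definition cd {mu : nat} (x y : digit mu) : Z := (Z.of_nat (proj1_sig x) - Z.of_nat (proj1_sig y))%Z.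
Fixpoint Sz (d : nat) (c : nat -> Z) (n : nat) : Z :=
  match n with O => 0%Z | S m => (Z.of_nat d * Sz d c m + c m)%Z end.

Definition stT (K : Z) := { z : Z | (-(K+1) <= z <= K+1)%Z }.

Definition accR (K : Z) (r : cmp_rel) (z : Z) : Prop :=
  match r with
  | RGt => z = (K+1)%Z
  | RLt => z = (-(K+1))%Z
  | REq => (-K <= z <= K)%Z
  | RGe => (-K <= z)%Z
  | RLe => (z <= K)%Z
  | RNeq => z = (K+1)%Z \/ z = (-(K+1))%Z
  end.

Lemma stT_fin K : exists l : list (stT K), forall q, In q l.
Proof. destruct (range_list (-(K+1)) (K+1)) as [l Hl]. exact (sig_list _ l Hl). Qed.

Definition Mach (d mu : nat) (r : cmp_rel) : Buchi (digit mu * digit mu) :=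
  mkBuchi _ (stT (Kc d mu)) (stT_fin (Kc d mu))
    (fun q => proj1_sig q = 0%Z)
    (fun q xy q' => proj1_sig q' = clamp (Kc d mu) (Z.of_nat d * proj1_sig q + cd (fst xy) (snd xy))%Z)
    (fun q => accR (Kc d mu) r (proj1_sig q)).

Section Main.
Variables d mu : nat.
Hypothesis hd : (1 < d)%nat.
Let K := Kc d mu.
Lemma K_facts : (0 <= K /\ (Z.of_nat d - 1) * K <= Z.of_nat mu < (Z.of_nat d - 1) * (K + 1))%Z.
Proof.
 unfold K, Kc. assert (h : (0 < Z.of_nat d - 1)%Z) by lia.
 pose proof (Z.mul_div_le (Z.of_nat mu) _ h). pose proof (Z.mul_succ_div_gt (Z.of_nat mu) _ h).
 pose proof (Z.div_pos (Z.of_nat mu) (Z.of_nat d - 1) ltac:(lia) h). unfold Z.succ in *. lia.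
Qed.

Lemma clamp_range z : (-(K+1) <= clamp K z <= K+1)%Z.
Proof. pose proof K_facts. unfold clamp. lia. Qed.

Lemma clamp_step s c : (- Z.of_nat mu <= c <= Z.of_nat mu)%Z ->
  clamp K (Z.of_nat d * clamp K s + c) = clamp K (Z.of_nat d * s + c).
Proof.
 intro hc. pose proof K_facts. unfold clamp.
 assert (hd' : (2 <= Z.of_nat d)%Z) by lia.
 assert (E1 : (Z.of_nat d * (K+1) + c >= K+1)%Z) by nia.
 assert (E2 : (Z.of_nat d * (-(K+1)) + c <= -(K+1))%Z) by nia.
 destruct (Z_le_gt_dec (K+1) s).
 - replace (Z.max (- (K + 1)) (Z.min (K + 1) s)) with (K+1)%Z by lia.
   assert (Z.of_nat d * (K+1) <= Z.of_nat d * s)%Z by nia. lia.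
 - destruct (Z_le_gt_dec s (-(K+1))).
   + replace (Z.max (- (K + 1)) (Z.min (K + 1) s)) with (-(K+1))%Z by lia.
     assert (Z.of_nat d * s <= Z.of_nat d * (-(K+1)))%Z by nia. lia.
   + replace (Z.max (- (K + 1)) (Z.min (K + 1) s)) with s by lia. reflexivity.
Qed.

Variables A B : nat -> digit mu.
Let c := fun n => cd (A n) (B n).
Lemma c_bnd n : (- Z.of_nat mu <= c n <= Z.of_nat mu)%Z.
Proof. unfold c, cd. destruct (A n) as [a ha], (B n) as [b hb]; simpl. lia. Qed.

Lemma perm_pos n m : (n <= m)%nat -> (K + 1 <= Sz d c n)%Z -> (K + 1 <= Sz d c m)%Z.
Proof.
 intros h. induction h; auto. intro H. specialize (IHh H). simpl.
 pose proof K_facts. pose proof (c_bnd m). nia.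
Qed.
Lemma perm_neg n m : (n <= m)%nat -> (Sz d c n <= -(K + 1))%Z -> (Sz d c m <= -(K+1))%Z.
Proof.
 intros h. induction h; auto. intro H. specialize (IHh H). simpl.
 pose proof K_facts. pose proof (c_bnd m). nia.
Qed.

Let dr := INR d.
Lemma dr_gt1 : 1 < dr.
Proof. unfold dr. apply (lt_INR 1 d) in hd. simpl in hd. exact hd. Qed.

Lemma DS_spec (X : nat -> digit mu) : infinite_sum (fun i => INR (proj1_sig (X i)) / dr ^ i) (DS X d).
Proof.
 unfold DS. apply epsilon_spec. apply (geo_conv dr dr_gt1 (INR mu)).
 intro i. pose proof dr_gt1. assert (0 < dr ^ i) by (apply pow_lt; lra).
 rewrite Rabs_right. 2:{ apply Rle_ge. unfold Rdiv. apply Rmult_le_pos. apply pos_INR. left; apply Rinv_0_lt_compat; auto. }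
 unfold Rdiv. apply Rmult_le_compat_r. left; apply Rinv_0_lt_compat; auto. apply le_INR. exact (proj2_sig (X i)).
Qed.

Let D := DS A d - DS B d.
Let f := fun i => IZR (c i) / dr ^ i.

Lemma f_bnd i : Rabs (f i) <= INR mu / dr ^ i.
Proof.
 pose proof dr_gt1. assert (0 < dr ^ i) by (apply pow_lt; lra).
 unfold f, Rdiv. rewrite Rabs_mult, Rabs_inv, (Rabs_right (dr ^ i)) by lra.
 apply Rmult_le_compat_r. left; apply Rinv_0_lt_compat; auto.
 rewrite <- abs_IZR, INR_IZR_INZ. apply IZR_le. pose proof (c_bnd i). lia.
Qed.

Lemma D_sum : infinite_sum f D.
Proof.
 pose proof (CV_minus _ _ _ _ (DS_spec A) (DS_spec B)) as H.
 intros eps He. destruct (H eps He) as [N HN]. exists N. intros n Hn.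
 specialize (HN n Hn). simpl in HN. rewrite <- minus_sum in HN.
 unfold D. rewrite (sum_eq f (fun i => INR (proj1_sig (A i)) / dr ^ i - INR (proj1_sig (B i)) / dr ^ i)). exact HN.
 intros i _. unfold f, c, cd. rewrite minus_IZR, <- !INR_IZR_INZ. field.
 apply pow_nonzero. pose proof dr_gt1; lra.
Qed.

Lemma ps_Sz n : dr ^ n * ps f n = dr * IZR (Sz d c n).
Proof.
 induction n; simpl. ring.
 rewrite plus_IZR, mult_IZR, <- INR_IZR_INZ. fold dr.
 unfold f at 2. replace (dr * dr ^ n * (ps f n + IZR (c n) / dr ^ n)) with (dr * (dr ^ n * ps f n) + dr * IZR (c n)).
 rewrite IHn. ring. field. apply pow_nonzero. pose proof dr_gt1; lra.
Qed.

Lemma key n : Rabs (D * dr ^ n - dr * IZR (Sz d c n)) <= INR mu * dr / (dr - 1).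
Proof.
 pose proof dr_gt1. assert (0 < dr ^ n) by (apply pow_lt; lra).
 pose proof (geo_tail dr (INR mu) f dr_gt1 f_bnd D D_sum n) as G.
 rewrite <- ps_Sz. replace (D * dr ^ n - dr ^ n * ps f n) with (dr ^ n * (D - ps f n)) by ring.
 rewrite Rabs_mult, (Rabs_right (dr ^ n)) by lra.
 apply (Rmult_le_compat_l (dr ^ n)) in G; [|lra].
 eapply Rle_trans. apply G. right. field. lra.
Qed.

Lemma KR : 0 <= IZR K /\ INR mu / (dr - 1) < IZR K + 1.
Proof.
 pose proof K_facts as [h1 [_ h2]]. pose proof dr_gt1. split. apply IZR_le; auto.
 apply IZR_lt in h2. rewrite mult_IZR, minus_IZR, plus_IZR, <- !INR_IZR_INZ in h2. fold dr in h2.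
 apply (Rmult_lt_reg_l (dr - 1)). lra. replace ((dr - 1) * (INR mu / (dr - 1))) with (INR mu) by (field; lra).
 exact h2.
Qed.

Lemma Epos_D : (exists n, (K + 1 <= Sz d c n)%Z) -> D > 0.
Proof.
 intros [n hn]. pose proof dr_gt1. assert (0 < dr ^ n) by (apply pow_lt; lra).
 pose proof (key n) as G. apply Rabs_bnd in G. destruct KR as [_ hk].
 apply IZR_le in hn. rewrite plus_IZR in hn.
 replace (INR mu * dr / (dr - 1)) with (dr * (INR mu / (dr - 1))) in G by (field; lra).
 assert (dr * (INR mu / (dr - 1)) < dr * IZR (Sz d c n)).
 { apply Rmult_lt_compat_l. lra. lra. }
 set (p := dr ^ n) in *. nra.
Qed.

Lemma Eneg_D : (exists n, (Sz d c n <= -(K + 1))%Z) -> D < 0.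
Proof.
 intros [n hn]. pose proof dr_gt1. assert (0 < dr ^ n) by (apply pow_lt; lra).
 pose proof (key n) as G. apply Rabs_bnd in G. destruct KR as [_ hk].
 apply IZR_le in hn. rewrite opp_IZR, plus_IZR in hn.
 replace (INR mu * dr / (dr - 1)) with (dr * (INR mu / (dr - 1))) in G by (field; lra).
 assert (dr * IZR (Sz d c n) < - (dr * (INR mu / (dr - 1)))).
 { rewrite Ropp_mult_distr_r. apply Rmult_lt_compat_l. lra. lra. }
 set (p := dr ^ n) in *. nra.
Qed.

Lemma Emid_D : (forall n, (- K <= Sz d c n <= K)%Z) -> D = 0.
Proof.
 intro hm. destruct (Req_dec D 0) as [|hD]; auto. exfalso.
 pose proof dr_gt1. assert (hDp : 0 < Rabs D) by (apply Rabs_pos_lt; auto).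
 set (C := dr * IZR K + INR mu * dr / (dr - 1)).
 destruct (pow_unb dr dr_gt1 (C / Rabs D)) as [n hn].
 assert (0 < dr ^ n) by (apply pow_lt; lra).
 apply (Rmult_lt_compat_l (Rabs D)) in hn; auto.
 replace (Rabs D * (C / Rabs D)) with C in hn by (field; lra).
 pose proof (key n) as G.
 assert (hs : Rabs (IZR (Sz d c n)) <= IZR K).
 { rewrite <- abs_IZR. apply IZR_le. specialize (hm n). lia. }
 assert (Rabs (D * dr ^ n) <= C).
 { replace (D * dr ^ n) with ((D * dr ^ n - dr * IZR (Sz d c n)) + dr * IZR (Sz d c n)) by ring.
   eapply Rle_trans. apply Rabs_triang. rewrite Rabs_mult, (Rabs_right dr) by lra.
   unfold C. apply (Rmult_le_compat_l dr) in hs; lra. }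
 rewrite Rabs_mult, (Rabs_right (dr ^ n)) in H1 by lra. lra.
Qed.

Lemma trich : (D > 0 <-> exists n, (K + 1 <= Sz d c n)%Z) /\ (D < 0 <-> exists n, (Sz d c n <= -(K + 1))%Z).
Proof.
 assert (G : ~ (exists n, (K + 1 <= Sz d c n)%Z) -> ~ (exists n, (Sz d c n <= -(K + 1))%Z) -> D = 0).
 { intros h1 h2. apply Emid_D. intro n.
   assert (~ (K + 1 <= Sz d c n)%Z) by (intro; apply h1; eauto).
   assert (~ (Sz d c n <= -(K + 1))%Z) by (intro; apply h2; eauto). lia. }
 split; split; try (apply Epos_D); try (apply Eneg_D); intro hD.
 - destruct (classic (exists n, (K + 1 <= Sz d c n)%Z)) as [|h1]; auto.
   destruct (classic (exists n, (Sz d c n <= -(K + 1))%Z)) as [h2|h2].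
   + apply Eneg_D in h2. lra.
   + specialize (G h1 h2). lra.
 - destruct (classic (exists n, (Sz d c n <= -(K + 1))%Z)) as [|h2]; auto.
   destruct (classic (exists n, (K + 1 <= Sz d c n)%Z)) as [h1|h1].
   + apply Epos_D in h1. lra.
   + specialize (G h1 h2). lra.
Qed.

Definition io (P : Z -> Prop) := forall N, exists m, (N <= m)%nat /\ P (clamp K (Sz d c m)).

Lemma run_eq r : buchi_accepts (Mach d mu r) (fun i => (A i, B i)) <-> io (accR K r).
Proof.
 split.
 - intros [rho [h0 [hs ha]]].
   assert (E : forall n, proj1_sig (rho n) = clamp K (Sz d c n)).
   { induction n. simpl in h0 |- *. rewrite h0. pose proof K_facts. unfold clamp. lia.
     specialize (hs n). simpl in hs. rewrite hs, IHn. simpl. apply clamp_step. apply c_bnd. }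
   intro N. destruct (ha N) as [m [hm hacc]]. exists m. split; auto. simpl in hacc. rewrite <- E. exact hacc.
 - intro hio. exists (fun n => exist _ (clamp K (Sz d c n)) (clamp_range _) : stT (Kc d mu)).
   split; [|split].
   + simpl. pose proof K_facts. unfold clamp. lia.
   + intro i. simpl. symmetry. apply clamp_step. apply c_bnd.
   + intro N. destruct (hio N) as [m [hm hp]]. exists m. split; auto.
Qed.

Lemma io_perm_pos : (exists n, (K + 1 <= Sz d c n)%Z) -> forall N, exists m, (N <= m)%nat /\ (K + 1 <= Sz d c m)%Z.
Proof. intros [n hn] N. exists (max N n). split. lia. apply (perm_pos n); auto; lia. Qed.
Lemma io_perm_neg : (exists n, (Sz d c n <= -(K + 1))%Z) -> forall N, exists m, (N <= m)%nat /\ (Sz d c m <= -(K + 1))%Z.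
Proof. intros [n hn] N. exists (max N n). split. lia. apply (perm_neg n); auto; lia. Qed.

Lemma final r : io (accR K r) <-> cmp_interp r D 0.
Proof.
 pose proof K_facts as [hK0 _]. destruct trich as [[p1 p2] [n1 n2]].
 destruct r; unfold io, accR, cmp_interp, clamp; split.
 - intro h. apply Rnot_lt_le. intro hl. destruct (p1 hl) as [n hn].
   destruct (h n) as [m [hm hp]]. pose proof (perm_pos n m hm hn). lia.
 - intros hl N. exists N. split; auto.
   assert (~ (K + 1 <= Sz d c N)%Z). { intro. assert (D > 0) by (apply p2; eauto). lra. } lia.
 - intro h. destruct (h 0%nat) as [m [_ hp]]. apply n2. exists m. lia.
 - intros hl N. destruct (io_perm_neg (n1 hl) N) as [m [hm hp]]. exists m. split; auto. lia.
 - intro h. apply Rle_ge, Rnot_lt_le. intro hl. destruct (n1 hl) as [n hn].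
   destruct (h n) as [m [hm hp]]. pose proof (perm_neg n m hm hn). lia.
 - intros hl N. exists N. split; auto.
   assert (~ (Sz d c N <= -(K + 1))%Z). { intro. assert (D < 0) by (apply n2; eauto). lra. } lia.
 - intro h. destruct (h 0%nat) as [m [_ hp]]. apply p2. exists m. lia.
 - intros hl N. destruct (io_perm_pos (p1 hl) N) as [m [hm hp]]. exists m. split; auto. lia.
 - intro h. destruct (Rtotal_order D 0) as [hl|[|hl]]; auto; exfalso.
   + destruct (n1 hl) as [n hn]. destruct (h n) as [m [hm hp]]. pose proof (perm_neg n m hm hn). lia.
   + destruct (p1 hl) as [n hn]. destruct (h n) as [m [hm hp]]. pose proof (perm_pos n m hm hn). lia.
 - intros hl N. exists N. split; auto.
   assert (~ (K + 1 <= Sz d c N)%Z). { intro. assert (D > 0) by (apply p2; eauto). lra. }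
   assert (~ (Sz d c N <= -(K + 1))%Z). { intro. assert (D < 0) by (apply n2; eauto). lra. } lia.
 - intros h hD. destruct (h 0%nat) as [m [_ hp]].
   destruct hp as [hp|hp]; [assert (D > 0) by (apply p2; exists m; lia) | assert (D < 0) by (apply n2; exists m; lia)]; lra.
 - intros hD N. destruct (Rtotal_order D 0) as [hl|[|hl]]; [|contradiction|].
   + destruct (io_perm_neg (n1 hl) N) as [m [hm hp]]. exists m. split; auto. lia.
   + destruct (io_perm_pos (p1 hl) N) as [m [hm hp]]. exists m. split; auto. lia.
Qed.

Lemma main_eq r : buchi_accepts (Mach d mu r) (fun i => (A i, B i)) <-> cmp_interp r (DS A d) (DS B d).
Proof.
 rewrite run_eq, final. unfold D. destruct r; simpl; split; intro; try lra;
 intro e; apply H; lra.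
Qed.
End Main.

Theorem corollary12 (d mu : nat) (hd : (1 < d)%nat) (hmu : (0 < mu)%nat) :
  forall r : cmp_rel,
    exists M : Buchi (digit mu * digit mu),
      forall A B : nat -> digit mu,
        buchi_accepts M (fun i => (A i, B i)) <-> cmp_interp r (DS A d) (DS B d).
Proof.
 intro r. exists (Mach d mu r). intros A B. apply main_eq. exact hd.
Qed.
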